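(* For every term $M$ of the distant Bang calculus $\mathtt{dBang}$, the Taylor expansion of its Böhm tree equals its Taylor normal form: $\mathcal{T}(\mathtt{BT}_{!}(M)) = \mathrm{nf}(\mathcal{T}(M))$.
   Context: \textbf{dBang.} Terms: $M,N ::= x \mid \lambda x.M \mid MN \mid M[N/x] \mid\ !M \mid \mathrm{der}\,M$, where $M[N/x]$ is an explicit substitution binding $x$ in $M$; terms are taken up to $\alpha$-conversion and $M\{N/x\}$ denotes capture-avoiding meta-level substitution. List contexts: $L ::= \square \mid L[N/x]$, with $L\langle M\rangle$ the filling of the hole. Root rules: $L\langle\lambda x.M\rangle N \mapsto L\langle M[N/x]\rangle$; $M[L\langle !N\rangle/x]\mapsto L\langle M\{N/x\}\rangle$; $\mathrm{der}(L\langle !N\rangle)\mapsto L\langle N\rangle$ (bound variables of $L$ chosen fresh). Full reduction $\to$ is the closure of these rules under arbitrary contexts; $\to^*$ its reflexive-transitive closure. \textbf{Resource calculus.} Resource terms: $m,n ::= x\mid \lambda x.m\mid mn\mid m[n/x]\mid \mathrm{der}\,m\mid [m_1,\dots,m_k]$ ($k\ge 0$, finite multisets called bags). Resource list contexts $l ::= \square\mid l[n/x]$. One-step resource reduction relates a resource term to a resource term or to the symbol $\emptyset$ (zero), by the rules: $\mathrm{der}(l\langle[m]\rangle)\to l\langle m\rangle$; $\mathrm{der}(l\langle[m_1,\dots,m_k]\rangle)\to\emptyset$ if $k\neq 1$; $l\langle\lambda x.m\rangle n\to l\langle m[n/x]\rangle$; $m[l\langle[n_1,\dots,n_k]\rangle/x]\to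 l\langle m\{n_{\sigma(1)}/x_1,\dots,n_{\sigma(k)}/x_k\}\rangle$ for each permutation $\sigma$ of $\{1,\dots,k\}$ when $x$ has exactly $k$ free occurrences $x_1,\dots,x_k$ in $m$ (each occurrence replaced linearly), and $m[l\langle[n_1,\dots,n_k]\rangle/x]\to\emptyset$ otherwise; closed under all contexts (a term containing a subterm reducing to $\emptyset$ reduces to $\emptyset$). A resource term is normal if it has no reduct. \textbf{Taylor expansion.} The approximation relation $m\sqsubset M$ is defined by: $x\sqsubset x$; $\lambda x.m\sqsubset\lambda x.M$ if $m\sqsubset M$; $mn\sqsubset MN$ if $m\sqsubset M,n\sqsubset N$; $m[n/x]\sqsubset M[N/x]$ if $m\sqsubset M,n\sqsubset N$; $\mathrm{der}\,m\sqsubset\mathrm{der}\,M$ if $m\sqsubset M$; $[m_1,\dots,m_k]\sqsubset\ !M$ for any $k\ge0$ if $m_i\sqsubset M$ for all $i$. The same rules apply when $M$ contains the constant $\bot$ (there is no rule for $\bot$, so nothing approximates $\bot$). $\mathcal T(M)=\{m\mid m\sqsubset M\}$, and $\mathrm{nf}(\mathcal T(M))$ is the set of normal resource terms $p$ such that $m\to^* p$ for some $m\in\mathcal T(M)$. \textbf{Böhm trees.} Extend the syntax of terms with a constant $\bot$. For such terms, $A\sqsubseteq B$ means $A$ is obtained from $B$ by replacing some subterms by $\bot$. A (dBang) approximant is a term of the extended syntax having no subterm of any of the forms $L\langle\lambda x.A\rangle B$, $L\langle\bot\rangle B$, $\mathrm{der}(L\langle !A\rangle)$, $\mathrm{der}(L\langle\bot\rangle)$,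 $A[L\langle !B\rangle/x]$, $A[L\langle\bot\rangle/x]$. The set of approximants of $M$ is $\mathcal A(M)=\{A \text{ approximant}\mid \exists N,\ M\to^* N,\ A\sqsubseteq N\}$, and $\mathtt{BT}_!(M)=\mathcal A(M)$. Its Taylor expansion is $\mathcal T(\mathtt{BT}_!(M))=\bigcup_{A\in\mathcal A(M)}\mathcal T(A)$. *)

(* Defs.v *)
From Stdlib Require Import List Arith Permutation Relations.
Import ListNotations.

(** * dBang terms, extended with the constant Bot (bottom).
    [ES t u] is the explicit substitution t[u/x]: it binds index 0 in t. *)
Inductive term : Type :=
| Var : nat -> term
| Lam : term -> term
| App : term -> term -> term
| ES  : term -> term -> term
| Bang : term -> term
| Der : term -> term
| Bot : term.

Fixpoint bot_free (t : term) : Prop :=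
  match t with
  | Var _ => True
  | Lam t => bot_free t
  | App t u => bot_free t /\ bot_free u
  | ES t u => bot_free t /\ bot_free u
  | Bang t => bot_free t
  | Der t => bot_free t
  | Bot => False
  end.

Fixpoint lift (k c : nat) (t : term) : term :=
  match t with
  | Var i => if c <=? i then Var (i + k) else Var i
  | Lam t => Lam (lift k (S c) t)
  | App t u => App (lift k c t) (lift k c u)
  | ES t u => ES (lift k (S c) t) (lift k c u)
  | Bang t => Bang (lift k c t)
  | Der t => Der (lift k c t)
  | Bot => Bot
  end.

Fixpoint subst (c : nat) (t : term) (N : term) : term :=
  match t with
  | Var i => if i =? c then lift c 0 N
             else if c <? i then Var (pred i) else Var i
  | Lam t => Lam (subst (S c) t N)
  | App t u => App (subst c t N) (subst c u N)
  | ES t u => ES (subst (S c) t N) (subst c u N)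
  | Bang t => Bang (subst c t N)
  | Der t => Der (subst c t N)
  | Bot => Bot
  end.

(** List contexts L = □[N1/x1]...[Nk/xk], represented by [N1; ...; Nk]
    (innermost first); [fill L t] is L<t>; the hole is under [length L]
    binders. *)
Fixpoint fill (L : list term) (t : term) : term :=
  match L with
  | [] => t
  | N :: L' => fill L' (ES t N)
  end.

(** Full reduction: root rules closed under all contexts.  Bound
    variables of L are fresh: realised by lifting. *)
Inductive step : term -> term -> Prop :=
| st_beta L M N :
    step (App (fill L (Lam M)) N) (fill L (ES M (lift (length L) 0 N)))
| st_subst L M N :
    step (ES M (fill L (Bang N))) (fill L (subst 0 (lift (length L) 1 M) N))
| st_der L N :
    step (Der (fill L (Bang N))) (fill L N)
| st_lam t t' : step t t' -> step (Lam t) (Lam t')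
| st_app_l t t' u : step t t' -> step (App t u) (App t' u)
| st_app_r t u u' : step u u' -> step (App t u) (App t u')
| st_es_l t t' u : step t t' -> step (ES t u) (ES t' u)
| st_es_r t u u' : step u u' -> step (ES t u) (ES t u')
| st_bang t t' : step t t' -> step (Bang t) (Bang t')
| st_der_c t t' : step t t' -> step (Der t) (Der t').

Definition steps : term -> term -> Prop := clos_refl_trans term step.

Inductive bot_le : term -> term -> Prop :=
| bl_bot B : bot_le Bot B
| bl_var i : bot_le (Var i) (Var i)
| bl_lam A B : bot_le A B -> bot_le (Lam A) (Lam B)
| bl_app A1 A2 B1 B2 : bot_le A1 B1 -> bot_le A2 B2 -> bot_le (App A1 A2) (App B1 B2)
| bl_es A1 A2 B1 B2 : bot_le A1 B1 -> bot_le A2 B2 -> bot_le (ES A1 A2) (ES B1 B2)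
| bl_bang A B : bot_le A B -> bot_le (Bang A) (Bang B)
| bl_der A B : bot_le A B -> bot_le (Der A) (Der B).

Inductive subterm : term -> term -> Prop :=
| sub_refl t : subterm t t
| sub_lam s t : subterm s t -> subterm s (Lam t)
| sub_app_l s t u : subterm s t -> subterm s (App t u)
| sub_app_r s t u : subterm s u -> subterm s (App t u)
| sub_es_l s t u : subterm s t -> subterm s (ES t u)
| sub_es_r s t u : subterm s u -> subterm s (ES t u)
| sub_bang s t : subterm s t -> subterm s (Bang t)
| sub_der s t : subterm s t -> subterm s (Der t).

Definition forbidden (t : term) : Prop :=
  exists (L : list term) (A B : term),
    t = App (fill L (Lam A)) B \/
    t = App (fill L Bot) B \/
    t = Der (fill L (Bang A)) \/
    t = Der (fill L Bot) \/
    t = ES A (fill L (Bang B)) \/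
    t = ES A (fill L Bot).

Definition approximant (A : term) : Prop :=
  forall s, subterm s A -> ~ forbidden s.

(** BT_!(M) = A(M), the set of approximants of M. *)
Definition BT (M : term) (A : term) : Prop :=
  approximant A /\ exists N, steps M N /\ bot_le A N.

(** * Resource calculus.  Bags are represented by lists; they are
    identified up to permutation via [req] below. *)
Inductive rterm : Type :=
| RVar : nat -> rterm
| RLam : rterm -> rterm
| RApp : rterm -> rterm -> rterm
| RES  : rterm -> rterm -> rterm
| RDer : rterm -> rterm
| RBag : list rterm -> rterm.

Fixpoint rlift (k c : nat) (m : rterm) : rterm :=
  match m with
  | RVar i => if c <=? i then RVar (i + k) else RVar i
  | RLam m => RLam (rlift k (S c) m)
  | RApp m n => RApp (rlift k c m) (rlift k c n)
  | RES m n => RES (rlift k (S c) m) (rlift k c n)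
  | RDer m => RDer (rlift k c m)
  | RBag ms => RBag (map (rlift k c) ms)
  end.

Fixpoint occ (c : nat) (m : rterm) : nat :=
  match m with
  | RVar i => if i =? c then 1 else 0
  | RLam m => occ (S c) m
  | RApp m n => occ c m + occ c n
  | RES m n => occ (S c) m + occ c n
  | RDer m => occ c m
  | RBag ms => list_sum (map (occ c) ms)
  end.

(** [lsub c m ns m']: m' is obtained from m by replacing each free
    occurrence of index [c] linearly by a distinct element of the list
    [ns] (every element used exactly once, in any assignment, i.e. for
    any permutation), indices above [c] being decremented. *)
Inductive lsub : nat -> rterm -> list rterm -> rterm -> Prop :=
| ls_var_eq c n : lsub c (RVar c) [n] (rlift c 0 n)
| ls_var_lt c i : i < c -> lsub c (RVar i) [] (RVar i)
| ls_var_gt c j : c <= j -> lsub c (RVar (S j)) [] (RVar j)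
| ls_lam c m ns m' : lsub (S c) m ns m' -> lsub c (RLam m) ns (RLam m')
| ls_app c m n ns ns1 ns2 m' n' :
    Permutation ns (ns1 ++ ns2) -> lsub c m ns1 m' -> lsub c n ns2 n' ->
    lsub c (RApp m n) ns (RApp m' n')
| ls_es c m n ns ns1 ns2 m' n' :
    Permutation ns (ns1 ++ ns2) -> lsub (S c) m ns1 m' -> lsub c n ns2 n' ->
    lsub c (RES m n) ns (RES m' n')
| ls_der c m ns m' : lsub c m ns m' -> lsub c (RDer m) ns (RDer m')
| ls_bag_nil c : lsub c (RBag []) [] (RBag [])
| ls_bag_cons c m ms ns ns1 ns2 m' ms' :
    Permutation ns (ns1 ++ ns2) -> lsub c m ns1 m' -> lsub c (RBag ms) ns2 (RBag ms') ->
    lsub c (RBag (m :: ms)) ns (RBag (m' :: ms')).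

Fixpoint rfill (l : list rterm) (m : rterm) : rterm :=
  match l with
  | [] => m
  | n :: l' => rfill l' (RES m n)
  end.

(** One-step resource reduction; [None] is the zero [∅]. *)
Inductive rstep : rterm -> option rterm -> Prop :=
| rs_der1 l m : rstep (RDer (rfill l (RBag [m]))) (Some (rfill l m))
| rs_der0 l ms : length ms <> 1 -> rstep (RDer (rfill l (RBag ms))) None
| rs_beta l m n :
    rstep (RApp (rfill l (RLam m)) n) (Some (rfill l (RES m (rlift (length l) 0 n))))
| rs_subst l m ns m' :
    lsub 0 (rlift (length l) 1 m) ns m' ->
    rstep (RES m (rfill l (RBag ns))) (Some (rfill l m'))
| rs_subst0 l m ns :
    occ 0 m <> length ns -> rstep (RES m (rfill l (RBag ns))) None
| rs_lam m r : rstep m r -> rstep (RLam m) (option_map RLam r)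
| rs_app_l m n r : rstep m r -> rstep (RApp m n) (option_map (fun m' => RApp m' n) r)
| rs_app_r m n r : rstep n r -> rstep (RApp m n) (option_map (fun n' => RApp m n') r)
| rs_es_l m n r : rstep m r -> rstep (RES m n) (option_map (fun m' => RES m' n) r)
| rs_es_r m n r : rstep n r -> rstep (RES m n) (option_map (fun n' => RES m n') r)
| rs_der_c m r : rstep m r -> rstep (RDer m) (option_map RDer r)
| rs_bag l1 m l2 r : rstep m r ->
    rstep (RBag (l1 ++ m :: l2)) (option_map (fun m' => RBag (l1 ++ m' :: l2)) r).

Definition rsteps : rterm -> rterm -> Prop :=
  clos_refl_trans rterm (fun m m' => rstep m (Some m')).

Definition rnormal (m : rterm) : Prop := forall r, ~ rstep m r.

Inductive req : rterm -> rterm -> Prop :=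
| rq_var i : req (RVar i) (RVar i)
| rq_lam m m' : req m m' -> req (RLam m) (RLam m')
| rq_app m n m' n' : req m m' -> req n n' -> req (RApp m n) (RApp m' n')
| rq_es m n m' n' : req m m' -> req n n' -> req (RES m n) (RES m' n')
| rq_der m m' : req m m' -> req (RDer m) (RDer m')
| rq_bag ms1 ms2 ms3 : Permutation ms1 ms2 -> Forall2 req ms2 ms3 ->
    req (RBag ms1) (RBag ms3).

Inductive rapprox : rterm -> term -> Prop :=
| ra_var i : rapprox (RVar i) (Var i)
| ra_lam m M : rapprox m M -> rapprox (RLam m) (Lam M)
| ra_app m n M N : rapprox m M -> rapprox n N -> rapprox (RApp m n) (App M N)
| ra_es m n M N : rapprox m M -> rapprox n N -> rapprox (RES m n) (ES M N)
| ra_der m M : rapprox m M -> rapprox (RDer m) (Der M)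
| ra_bag ms M : (forall m, In m ms -> rapprox m M) -> rapprox (RBag ms) (Bang M).

Definition taylor (M : term) (m : rterm) : Prop := rapprox m M.

Definition nf_taylor (M : term) (p : rterm) : Prop :=
  rnormal p /\ exists m, taylor M m /\ rsteps m p.

Definition taylor_BT (M : term) (m : rterm) : Prop :=
  exists A, BT M A /\ taylor A m.

Definition rset_eq (S1 S2 : rterm -> Prop) : Prop :=
  forall p, (exists q, req p q /\ S1 q) <-> (exists q, req p q /\ S2 q).

(* Main.v *)
Require Import Defs.
From Stdlib Require Import List Arith Lia Permutation Relations FunctionalExtensionality.
Import ListNotations.

Definition upren (xi : nat -> nat) : nat -> nat :=
  fun i => match i with 0 => 0 | S j => S (xi j) end.

Fixpoint ren (xi : nat -> nat) (t : term) : term :=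
  match t with
  | Var i => Var (xi i)
  | Lam t => Lam (ren (upren xi) t)
  | App t u => App (ren xi t) (ren xi u)
  | ES t u => ES (ren (upren xi) t) (ren xi u)
  | Bang t => Bang (ren xi t)
  | Der t => Der (ren xi t)
  | Bot => Bot
  end.

Definition up (s : nat -> term) : nat -> term :=
  fun i => match i with 0 => Var 0 | S j => ren S (s j) end.

Fixpoint inst (s : nat -> term) (t : term) : term :=
  match t with
  | Var i => s i
  | Lam t => Lam (inst (up s) t)
  | App t u => App (inst s t) (inst s u)
  | ES t u => ES (inst (up s) t) (inst s u)
  | Bang t => Bang (inst s t)
  | Der t => Der (inst s t)
  | Bot => Bot
  end.

Lemma ren_ren : forall t xi zeta, ren xi (ren zeta t) = ren (fun i => xi (zeta i)) t.
Proof.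
  induction t; intros; simpl; try rewrite IHt; try rewrite IHt1; try rewrite IHt2; try reflexivity;
  f_equal; f_equal; extensionality i; destruct i; reflexivity.
Qed.

Lemma inst_ren : forall t s xi, inst s (ren xi t) = inst (fun i => s (xi i)) t.
Proof.
  induction t; intros; simpl; try rewrite IHt; try rewrite IHt1; try rewrite IHt2; try reflexivity;
  f_equal; f_equal; extensionality i; destruct i; reflexivity.
Qed.

Lemma ren_inst : forall t s xi, ren xi (inst s t) = inst (fun i => ren xi (s i)) t.
Proof.
  induction t; intros; simpl; try rewrite IHt; try rewrite IHt1; try rewrite IHt2; try reflexivity;
  f_equal; f_equal; extensionality i; destruct i; simpl; try reflexivity;
  rewrite !ren_ren; reflexivity.
Qed.

Lemma inst_inst : forall t s r, inst s (inst r t) = inst (fun i => inst s (r i)) t.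
Proof.
  induction t; intros; simpl; try rewrite IHt; try rewrite IHt1; try rewrite IHt2; try reflexivity;
  f_equal; f_equal; extensionality i; destruct i; simpl; try reflexivity;
  rewrite inst_ren, ren_inst; reflexivity.
Qed.

Lemma ren_as_inst : forall t xi, ren xi t = inst (fun i => Var (xi i)) t.
Proof.
  induction t; intros; simpl; try rewrite IHt; try rewrite IHt1; try rewrite IHt2; try reflexivity;
  f_equal; f_equal; extensionality i; destruct i; reflexivity.
Qed.

Lemma inst_Var : forall t, inst Var t = t.
Proof.
  induction t; simpl; try rewrite IHt1; try rewrite IHt2; try reflexivity;
  (replace (up Var) with Var by (extensionality i; destruct i; reflexivity)); congruence.
Qed.

Lemma ren_id : forall t xi, (forall i, xi i = i) -> ren xi t = t.
Proof.
  intros. rewrite ren_as_inst. replace (fun i => Var (xi i)) with Var.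
  apply inst_Var. extensionality i. rewrite H. reflexivity.
Qed.

Lemma lift_ren : forall t k c, lift k c t = ren (fun i => if c <=? i then i + k else i) t.
Proof.
  induction t; intros; simpl; try rewrite IHt; try rewrite IHt1; try rewrite IHt2; try reflexivity;
  [destruct (c <=? n); reflexivity| ..];
  f_equal; f_equal; extensionality i; destruct i; simpl; try reflexivity;
  destruct (c <=? i); reflexivity.
Qed.

Lemma lift0k : forall t k, lift k 0 t = ren (fun i => i + k) t.
Proof. intros. rewrite lift_ren. reflexivity. Qed.

Lemma lift0 : forall t c, lift 0 c t = t.
Proof.
  intros. rewrite lift_ren. apply ren_id. intros i. destruct (c <=? i); lia.
Qed.

Definition substf (c : nat) (N : term) : nat -> term :=
  fun i => if i =? c then lift c 0 N else if c <? i then Var (pred i) else Var i.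

Lemma up_substf : forall c N, up (substf c N) = substf (S c) N.
Proof.
  intros. extensionality i. destruct i; simpl. reflexivity.
  unfold substf. simpl.
  destruct (i =? c) eqn:E1.
  - rewrite !lift0k, ren_ren. f_equal. extensionality x. lia.
  - replace (S c <? S i) with (c <? i) by reflexivity.
    destruct (c <? i) eqn:E2; simpl.
    + apply Nat.ltb_lt in E2. destruct i; [lia|reflexivity].
    + reflexivity.
Qed.

Lemma subst_inst : forall t c N, subst c t N = inst (substf c N) t.
Proof.
  induction t; intros; simpl; try rewrite IHt; try rewrite IHt1; try rewrite IHt2;
  try rewrite up_substf; reflexivity.
Qed.

Fixpoint upn (k : nat) (s : nat -> term) : nat -> term :=
  match k with 0 => s | S k => up (upn k s) end.

Lemma upn_ge : forall k s i, upn k s (i + k) = ren (fun x => x + k) (s i).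
Proof.
  induction k; intros; simpl.
  - rewrite Nat.add_0_r. symmetry. apply ren_id. intros; lia.
  - rewrite Nat.add_succ_r. simpl. rewrite IHk, ren_ren. f_equal. extensionality x. lia.
Qed.

Lemma upn_lt : forall k s i, i < k -> upn k s i = Var i.
Proof.
  induction k; intros; simpl. lia.
  destruct i; simpl. reflexivity. rewrite IHk by lia. reflexivity.
Qed.

Fixpoint instL (s : nat -> term) (L : list term) : list term :=
  match L with
  | [] => []
  | N :: L' => inst (upn (length L') s) N :: instL s L'
  end.

Lemma length_instL : forall s L, length (instL s L) = length L.
Proof. induction L; simpl; auto. Qed.

Lemma inst_fill : forall L t s, inst s (fill L t) = fill (instL s L) (inst (upn (length L) s) t).
Proof.
  induction L; intros; simpl. reflexivity.
  rewrite IHL. simpl. reflexivity.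
Qed.

Lemma fill_app : forall L1 L2 t, fill (L1 ++ L2) t = fill L2 (fill L1 t).
Proof. induction L1; intros; simpl; auto. Qed.

Definition sig (k : nat) (N : term) : nat -> term :=
  fun i => match i with 0 => N | S j => Var (j + k) end.

Lemma I0 : forall M N k, subst 0 (lift k 1 M) N = inst (sig k N) M.
Proof.
  intros. rewrite subst_inst, lift_ren, inst_ren. f_equal. extensionality i.
  destruct i; simpl; unfold substf; simpl. rewrite lift0. reflexivity. reflexivity.
Qed.

Lemma I2 : forall N k s, inst (upn k s) (lift k 0 N) = lift k 0 (inst s N).
Proof.
  intros. rewrite !lift0k, inst_ren, ren_inst. f_equal. extensionality i. apply upn_ge.
Qed.

Lemma I3 : forall M N k t,
  inst (upn k t) (inst (sig k N) M) = inst (sig k (inst (upn k t) N)) (inst (up t) M).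
Proof.
  intros. rewrite !inst_inst. f_equal. extensionality i. destruct i; simpl. reflexivity.
  rewrite upn_ge, inst_ren, ren_as_inst. reflexivity.
Qed.

Lemma I4 : forall P k m N, inst (upn k (sig m N)) (lift k 0 (lift 1 0 P)) = lift (k + m) 0 P.
Proof.
  intros. rewrite !lift0k, ren_ren, inst_ren, ren_as_inst. f_equal. extensionality i.
  replace (i + 1 + k) with (S i + k) by lia. rewrite upn_ge. simpl. f_equal. lia.
Qed.

Lemma I5a : forall Q k N, inst (sig k N) (lift 1 1 Q) = inst (sig (k + 1) N) Q.
Proof.
  intros. rewrite lift_ren, inst_ren. f_equal. extensionality i. destruct i; simpl. reflexivity.
  f_equal. lia.
Qed.

Lemma I5b : forall Q k m C N1,
  inst (upn k (sig m C)) (inst (sig k N1) (lift 1 1 Q)) = inst (sig (k + m) (inst (upn k (sig m C)) N1)) Q.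
Proof.
  intros. rewrite I5a, inst_inst. f_equal. extensionality i. destruct i; simpl. reflexivity.
  replace (i + (k + 1)) with (S i + k) by lia. rewrite upn_ge. simpl. f_equal. lia.
Qed.

Lemma lift_split : forall P a, lift (a + 1) 0 P = lift a 0 (lift 1 0 P).
Proof. intros. rewrite !lift0k, ren_ren. f_equal. extensionality i. lia. Qed.

Inductive par : term -> term -> Prop :=
| par_var i : par (Var i) (Var i)
| par_bot : par Bot Bot
| par_lam t t' : par t t' -> par (Lam t) (Lam t')
| par_app t t' u u' : par t t' -> par u u' -> par (App t u) (App t' u')
| par_es t t' u u' : par t t' -> par u u' -> par (ES t u) (ES t' u')
| par_bang t t' : par t t' -> par (Bang t) (Bang t')
| par_der t t' : par t t' -> par (Der t) (Der t')
| par_beta t L M N N' : par t (fill L (Lam M)) -> par N N' ->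
    par (App t N) (fill L (ES M (lift (length L) 0 N')))
| par_sub M M' t L N : par M M' -> par t (fill L (Bang N)) ->
    par (ES M t) (fill L (inst (sig (length L) N) M'))
| par_dr t L N : par t (fill L (Bang N)) -> par (Der t) (fill L N).

Lemma par_beta' : forall t L M N N' k X, par t (fill L (Lam M)) -> par N N' ->
  k = length L -> X = fill L (ES M (lift k 0 N')) -> par (App t N) X.
Proof. intros; subst; apply par_beta; auto. Qed.

Lemma par_sub' : forall M M' t L N k X, par M M' -> par t (fill L (Bang N)) ->
  k = length L -> X = fill L (inst (sig k N) M') -> par (ES M t) X.
Proof. intros; subst; apply par_sub; auto. Qed.

Lemma par_refl : forall t, par t t.
Proof. induction t; constructor; auto. Qed.

Lemma step_par : forall t t', step t t' -> par t t'.
Proof.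
  induction 1; try (first [apply par_lam | apply par_app | apply par_es | apply par_bang | apply par_der]; auto using par_refl; fail).
  - apply par_beta; apply par_refl.
  - rewrite I0. apply par_sub; apply par_refl.
  - apply par_dr; apply par_refl.
Qed.

Lemma steps_map : forall (f : term -> term), (forall x y, step x y -> step (f x) (f y)) ->
  forall a b, steps a b -> steps (f a) (f b).
Proof.
  intros f Hf a b H. induction H.
  - apply rt_step; auto.
  - apply rt_refl.
  - eapply rt_trans; eauto.
Qed.

Lemma steps_lam : forall a b, steps a b -> steps (Lam a) (Lam b).
Proof. apply steps_map. intros; constructor; auto. Qed.
Lemma steps_bang : forall a b, steps a b -> steps (Bang a) (Bang b).
Proof. apply steps_map. intros; constructor; auto. Qed.
Lemma steps_der : forall a b, steps a b -> steps (Der a) (Der b).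
Proof. apply steps_map. intros; constructor; auto. Qed.
Lemma steps_app : forall a b c d, steps a b -> steps c d -> steps (App a c) (App b d).
Proof.
  intros. eapply rt_trans.
  - apply (steps_map (fun x => App x c)); [intros; constructor; auto | eauto].
  - apply (steps_map (fun x => App b x)); [intros; constructor; auto | eauto].
Qed.
Lemma steps_es : forall a b c d, steps a b -> steps c d -> steps (ES a c) (ES b d).
Proof.
  intros. eapply rt_trans.
  - apply (steps_map (fun x => ES x c)); [intros; constructor; auto | eauto].
  - apply (steps_map (fun x => ES b x)); [intros; constructor; auto | eauto].
Qed.
Lemma steps_fill : forall L a b, steps a b -> steps (fill L a) (fill L b).
Proof.
  induction L; intros; simpl; auto. apply IHL. apply steps_es; auto. apply rt_refl.
Qed.

Lemma par_steps : forall t t', par t t' -> steps t t'.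
Proof.
  induction 1; try (apply rt_refl); auto using steps_lam, steps_app, steps_es, steps_bang, steps_der.
  - eapply rt_trans. apply steps_app; eauto. apply rt_step. apply st_beta.
  - eapply rt_trans. apply steps_es; eauto. apply rt_step. rewrite <- I0. apply st_subst.
  - eapply rt_trans. apply steps_der; eauto. apply rt_step. apply st_der.
Qed.

Lemma par_inst_gen (Rl : (nat -> term) -> (nat -> term) -> Prop)
  (Hup : forall s r, Rl s r -> Rl (up s) (up r))
  (Hpt : forall s r, Rl s r -> forall i, par (s i) (r i)) :
  forall t t', par t t' -> forall s r, Rl s r -> par (inst s t) (inst r t').
Proof.
  induction 1; intros s r HR; simpl; try (constructor; auto; fail).
  - apply Hpt; auto.
  - specialize (IHpar1 s r HR). rewrite inst_fill in IHpar1. simpl in IHpar1.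
    eapply par_beta'. exact IHpar1. apply (IHpar2 s r HR). symmetry; apply length_instL.
    rewrite inst_fill. simpl. rewrite I2. reflexivity.
  - specialize (IHpar2 s r HR). rewrite inst_fill in IHpar2. simpl in IHpar2.
    eapply par_sub'. apply (IHpar1 (up s) (up r) (Hup _ _ HR)). exact IHpar2. symmetry; apply length_instL.
    rewrite inst_fill, I3. reflexivity.
  - specialize (IHpar s r HR). rewrite inst_fill in IHpar. simpl in IHpar.
    rewrite inst_fill. apply par_dr. auto.
Qed.

Lemma up_var : forall xi, up (fun i => Var (xi i)) = (fun i => Var (upren xi i)).
Proof. intros. extensionality i. destruct i; reflexivity. Qed.

Lemma par_ren : forall t t' xi, par t t' -> par (ren xi t) (ren xi t').
Proof.
  intros. rewrite !ren_as_inst.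
  apply (par_inst_gen (fun s r => s = r /\ exists xi, s = fun i => Var (xi i))); auto.
  - intros s r [-> [z ->]]. split; auto. exists (upren z). apply up_var.
  - intros s r [-> [z ->]] i. constructor.
  - split; eauto.
Qed.

Lemma par_lift : forall t t' k c, par t t' -> par (lift k c t) (lift k c t').
Proof. intros. rewrite !lift_ren. apply par_ren; auto. Qed.

Lemma par_inst : forall t t' s r, (forall i, par (s i) (r i)) -> par t t' -> par (inst s t) (inst r t').
Proof.
  intros. apply (par_inst_gen (fun s r => forall i, par (s i) (r i))); auto.
  intros s0 r0 H1 i. destruct i; simpl. constructor. apply par_ren; auto.
Qed.

Lemma steps_inst : forall t t' s, steps t t' -> steps (inst s t) (inst s t').
Proof.
  intros. induction H.
  - apply par_steps. apply par_inst. intros; apply par_refl. apply step_par; auto.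
  - apply rt_refl.
  - eapply rt_trans; eauto.
Qed.

Lemma steps_lift : forall t t' k c, steps t t' -> steps (lift k c t) (lift k c t').
Proof. intros. rewrite !lift_ren, !ren_as_inst. apply steps_inst; auto. Qed.

Lemma steps_subst : forall t t' c N, steps t t' -> steps (subst c t N) (subst c t' N).
Proof. intros. rewrite !subst_inst. apply steps_inst; auto. Qed.

Lemma rev_cases : forall (L : list term), L = [] \/ exists L0 Z, L = L0 ++ [Z].
Proof.
  intros L. induction L using rev_ind; [left; auto | right; eauto].
Qed.

Lemma T1 : forall t Y, par t Y -> forall L M, t = fill L (Lam M) ->
  exists L' M', Y = fill L' (Lam M') /\
   forall P P', par P P' -> par (fill L (ES M (lift (length L) 0 P))) (fill L' (ES M' (lift (length L') 0 P'))).
Proof.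
  induction 1; intros L0 M0 E;
  (destruct (rev_cases L0) as [-> | [L1 [Z ->]]]; rewrite ?fill_app in E; simpl in E;
   try discriminate E; injection E; intros; subst).
  - exists [], t'. split; auto. intros. simpl. constructor; auto. apply par_lift; auto.
  - destruct (IHpar1 L1 M0 eq_refl) as [L1' [M1 [-> HT]]].
    exists (L1' ++ [u']), M1. split. rewrite fill_app. reflexivity.
    intros P P' HP. rewrite !fill_app, !length_app. simpl. rewrite !lift_split.
    constructor; auto. apply HT. apply par_lift; auto.
  - destruct (IHpar1 L1 M0 eq_refl) as [L1' [M1 [-> HT]]].
    exists (instL (sig (length L) N) L1' ++ L), (inst (up (upn (length L1') (sig (length L) N))) M1).
    split. rewrite inst_fill, fill_app. reflexivity.
    intros P P' HP. rewrite !fill_app, !length_app. simpl. rewrite lift_split.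
    eapply par_sub'. apply HT. apply par_lift. exact HP. exact H0. reflexivity.
    rewrite inst_fill. simpl. rewrite I4, length_instL. try (repeat f_equal; lia).
Qed.

Lemma T2 : forall t Y, par t Y -> forall L N, t = fill L (Bang N) ->
  exists L' N', Y = fill L' (Bang N') /\ par (fill L N) (fill L' N') /\
   forall Q Q', par Q Q' -> par (fill L (inst (sig (length L) N) Q)) (fill L' (inst (sig (length L') N') Q')).
Proof.
  induction 1; intros L0 N0 E;
  (destruct (rev_cases L0) as [-> | [L1 [Z ->]]]; rewrite ?fill_app in E; simpl in E;
   try discriminate E; injection E; intros; subst).
  - destruct (IHpar1 L1 N0 eq_refl) as [L1' [N1 [-> [HA HT]]]].
    exists (L1' ++ [u']), N1. split. rewrite fill_app. reflexivity.
    split. rewrite !fill_app. simpl. constructor; auto.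
    intros Q Q' HQ. rewrite !fill_app, !length_app. simpl. rewrite <- !I5a.
    constructor; auto. apply HT. apply par_lift; auto.
  - exists [], t'. split; auto. split; auto. intros. simpl. apply par_inst; auto.
    intros i; destruct i; simpl; auto. constructor.
  - destruct (IHpar1 L1 N0 eq_refl) as [L1' [N1 [-> [HA HT]]]].
    exists (instL (sig (length L) N) L1' ++ L), (inst (upn (length L1') (sig (length L) N)) N1).
    split. rewrite inst_fill, fill_app. reflexivity.
    split.
    + rewrite !fill_app. simpl. eapply par_sub'. exact HA. exact H0. reflexivity.
      rewrite inst_fill. reflexivity.
    + intros Q Q' HQ. rewrite !fill_app, !length_app. simpl. rewrite <- I5a.
      eapply par_sub'. apply HT. apply par_lift. exact HQ. exact H0. reflexivity.
      rewrite inst_fill, I5b, length_instL. reflexivity.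
Qed.

Fixpoint spine (t : term) : list term * term :=
  match t with
  | ES a b => let (L, h) := spine a in (L ++ [b], h)
  | _ => ([], t)
  end.

Lemma fill_spine : forall t, fill (fst (spine t)) (snd (spine t)) = t.
Proof.
  induction t; simpl; auto. destruct (spine t1) as [L h] eqn:E. simpl in *.
  rewrite fill_app. simpl. congruence.
Qed.

Lemma spine_fill : forall L h, (forall a b, h <> ES a b) -> spine (fill L h) = (L, h).
Proof.
  intros L h Hh. induction L using rev_ind.
  - simpl. destruct h; auto. exfalso; eapply Hh; eauto.
  - rewrite fill_app. simpl. rewrite IHL. reflexivity.
Qed.

Fixpoint rho (t : term) : term :=
  match t with
  | Var i => Var i
  | Bot => Bot
  | Lam a => Lam (rho a)
  | Bang a => Bang (rho a)
  | App a b => match spine (rho a) with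
               | (L, Lam M) => fill L (ES M (lift (length L) 0 (rho b)))
               | _ => App (rho a) (rho b) end
  | ES a b => match spine (rho b) with
              | (L, Bang N) => fill L (inst (sig (length L) N) (rho a))
              | _ => ES (rho a) (rho b) end
  | Der a => match spine (rho a) with
             | (L, Bang N) => fill L N
             | _ => Der (rho a) end
  end.

Lemma spine_eq : forall t L h, spine t = (L, h) -> t = fill L h.
Proof. intros. pose proof (fill_spine t). rewrite H in H0. simpl in H0. auto. Qed.

Lemma triangle : forall t u, par t u -> par u (rho t).
Proof.
  induction 1; simpl; try (constructor; auto; fail).
  - destruct (spine (rho t)) as [L h] eqn:E; apply spine_eq in E.
    destruct h; try (constructor; auto; fail). eapply par_beta'; eauto. congruence.
  - destruct (spine (rho u)) as [L h] eqn:E; apply spine_eq in E.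
    destruct h; try (constructor; auto; fail). eapply par_sub'; eauto. congruence.
  - destruct (spine (rho t)) as [L h] eqn:E; apply spine_eq in E.
    destruct h; try (constructor; auto; fail). rewrite E in IHpar. apply par_dr; auto.
  - destruct (T1 _ _ IHpar1 L M eq_refl) as [L' [M' [E HT]]].
    rewrite E, spine_fill by discriminate. apply HT; auto.
  - destruct (T2 _ _ IHpar2 L N eq_refl) as [L' [N' [E [HA HT]]]].
    rewrite E, spine_fill by discriminate. apply HT; auto.
  - destruct (T2 _ _ IHpar L N eq_refl) as [L' [N' [E [HA HT]]]].
    rewrite E, spine_fill by discriminate. auto.
Qed.

Lemma strip : forall t u2, clos_refl_trans term par t u2 -> forall u1, par t u1 ->
  exists v, clos_refl_trans term par u1 v /\ par u2 v.
Proof.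
  induction 1; intros u1 H1.
  - exists (rho x). split. apply rt_step. apply triangle; auto. apply triangle; auto.
  - exists u1. split. apply rt_refl. auto.
  - destruct (IHclos_refl_trans1 u1 H1) as [v1 [A1 B1]].
    destruct (IHclos_refl_trans2 v1 B1) as [v2 [A2 B2]].
    exists v2. split; auto. eapply rt_trans; eauto.
Qed.

Lemma conf_par : forall t u1, clos_refl_trans term par t u1 -> forall u2, clos_refl_trans term par t u2 ->
  exists v, clos_refl_trans term par u1 v /\ clos_refl_trans term par u2 v.
Proof.
  induction 1; intros u2 H2.
  - destruct (strip _ _ H2 y H) as [v [A B]]. exists v. split; auto. apply rt_step; auto.
  - exists u2. split; auto. apply rt_refl.
  - destruct (IHclos_refl_trans1 u2 H2) as [v1 [A1 B1]].
    destruct (IHclos_refl_trans2 v1 A1) as [v2 [A2 B2]].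
    exists v2. split; auto. eapply rt_trans; eauto.
Qed.

Lemma steps_rtpar : forall a b, steps a b -> clos_refl_trans term par a b.
Proof.
  induction 1. apply rt_step, step_par; auto. apply rt_refl. eapply rt_trans; eauto.
Qed.
Lemma rtpar_steps : forall a b, clos_refl_trans term par a b -> steps a b.
Proof.
  induction 1. apply par_steps; auto. apply rt_refl. eapply rt_trans; eauto.
Qed.

Theorem confluence : forall t u1 u2, steps t u1 -> steps t u2 -> exists v, steps u1 v /\ steps u2 v.
Proof.
  intros. destruct (conf_par t u1 (steps_rtpar _ _ H) u2 (steps_rtpar _ _ H0)) as [v [A B]].
  exists v; split; apply rtpar_steps; auto.
Qed.

Section RInd.
Variable P : rterm -> Prop.
Hypothesis Hvar : forall i, P (RVar i).
Hypothesis Hlam : forall m, P m -> P (RLam m).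
Hypothesis Happ : forall m n, P m -> P n -> P (RApp m n).
Hypothesis Hes : forall m n, P m -> P n -> P (RES m n).
Hypothesis Hder : forall m, P m -> P (RDer m).
Hypothesis Hbag : forall ms, Forall P ms -> P (RBag ms).
Fixpoint rterm_ind' (m : rterm) : P m :=
  match m with
  | RVar i => Hvar i
  | RLam m => Hlam m (rterm_ind' m)
  | RApp m n => Happ m n (rterm_ind' m) (rterm_ind' n)
  | RES m n => Hes m n (rterm_ind' m) (rterm_ind' n)
  | RDer m => Hder m (rterm_ind' m)
  | RBag ms => Hbag ms ((fix go (l : list rterm) : Forall P l :=
                          match l with
                          | [] => Forall_nil P
                          | x :: l' => Forall_cons x (rterm_ind' x) (go l')
                          end) ms)
  end.
End RInd.

Inductive rr : rterm -> term -> Prop :=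
| rr_var i M : steps M (Var i) -> rr (RVar i) M
| rr_lam m M X : steps M (Lam X) -> rr m X -> rr (RLam m) M
| rr_app m n M X Y : steps M (App X Y) -> rr m X -> rr n Y -> rr (RApp m n) M
| rr_es m n M X Y : steps M (ES X Y) -> rr m X -> rr n Y -> rr (RES m n) M
| rr_der m M X : steps M (Der X) -> rr m X -> rr (RDer m) M
| rr_bag ms M B : steps M (Bang B) -> (forall m, In m ms -> rr m B) -> rr (RBag ms) M.

Lemma rr_anti : forall m M M', steps M M' -> rr m M' -> rr m M.
Proof.
  intros m M M' HS H. inversion H; subst; econstructor; eauto; eapply rt_trans; eauto.
Qed.

Lemma rr_of_rapprox : forall m M, rapprox m M -> rr m M.
Proof.
  induction m using rterm_ind'; intros M Hap; inversion Hap; subst; econstructor; try apply rt_refl; eauto.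
  intros x Hx. match goal with HF : Forall _ _ |- _ => rewrite Forall_forall in HF; apply HF; auto end.
Qed.

Lemma rr_lift : forall m M k c, rr m M -> rr (rlift k c m) (lift k c M).
Proof.
  induction m using rterm_ind'; intros M k c Hr; inversion Hr; subst; simpl;
  match goal with HS : steps M _ |- _ => apply steps_lift with (k := k) (c := c) in HS; simpl in HS end.
  - destruct (c <=? i); constructor; auto.
  - econstructor; eauto.
  - econstructor; eauto.
  - econstructor; eauto.
  - econstructor; eauto.
  - econstructor. eauto.
    intros x Hx. apply in_map_iff in Hx. destruct Hx as [y [<- Hy]].
    match goal with HF : Forall _ _ |- _ => rewrite Forall_forall in HF; apply HF; auto end.
Qed.

Lemma rfill_inv : forall l h X, rr (rfill l h) X ->
  exists L H, steps X (fill L H) /\ Forall2 rr l L /\ rr h H.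
Proof.
  induction l; intros h X Hr; simpl in *.
  - exists [], X. split. apply rt_refl. split; auto.
  - destruct (IHl _ _ Hr) as [L [H [HS [HF HH]]]]. inversion HH; subst.
    exists (Y :: L), X0. split. simpl. eapply rt_trans. exact HS. apply steps_fill; auto.
    split; auto.
Qed.

Lemma rfill_rr : forall l L h H, Forall2 rr l L -> rr h H -> rr (rfill l h) (fill L H).
Proof.
  intros l L h H HF. revert h H. induction HF; intros; simpl; auto.
  apply IHHF. econstructor. apply rt_refl. auto. auto.
Qed.

Lemma subst_var_gt : forall c j N, c <= j -> subst c (Var (S j)) N = Var j.
Proof.
  intros. change (subst c (Var (S j)) N) with
    (if S j =? c then lift c 0 N else if c <? S j then Var (pred (S j)) else Var (S j)).
  replace (S j =? c) with false by (symmetry; apply Nat.eqb_neq; lia).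
  replace (c <? S j) with true by (symmetry; apply Nat.ltb_lt; lia). reflexivity.
Qed.

Lemma subst_var_lt : forall c i N, i < c -> subst c (Var i) N = Var i.
Proof.
  intros. change (subst c (Var i) N) with
    (if i =? c then lift c 0 N else if c <? i then Var (pred i) else Var i).
  replace (i =? c) with false by (symmetry; apply Nat.eqb_neq; lia).
  replace (c <? i) with false by (symmetry; apply Nat.ltb_nlt; lia). reflexivity.
Qed.

Lemma subst_var_eq : forall c N, subst c (Var c) N = lift c 0 N.
Proof.
  intros. change (subst c (Var c) N) with
    (if c =? c then lift c 0 N else if c <? c then Var (pred c) else Var c).
  rewrite Nat.eqb_refl. reflexivity.
Qed.

Lemma lsub_rr : forall c m ns m', lsub c m ns m' -> forall N, (forall n, In n ns -> rr n N) ->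
  (forall M, rr m M -> rr m' (subst c M N)) /\
  (forall ms ms', m = RBag ms -> m' = RBag ms' -> forall B, (forall x, In x ms -> rr x B) ->
      forall x, In x ms' -> rr x (subst c B N)).
Proof.
  induction 1; intros N0 Hns; (split; [intros M0 HM; inversion HM; subst | intros ms0 ms0' E1 E2; try discriminate]).
  - eapply rr_anti. apply steps_subst. eauto. rewrite subst_var_eq.
    apply rr_lift. apply Hns. simpl; auto.
  - constructor. eapply rt_trans. apply steps_subst; eauto. rewrite subst_var_lt by auto. apply rt_refl.
  - constructor. eapply rt_trans. apply steps_subst; eauto. rewrite subst_var_gt by auto. apply rt_refl.
  - destruct (IHlsub N0 Hns) as [A _]. econstructor. eapply rt_trans. apply steps_subst; eauto.
    simpl. apply rt_refl. auto.
  - assert (H1' : forall n, In n ns1 -> rr n N0) by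
      (intros; apply Hns; eapply Permutation_in; [symmetry; eauto | apply in_or_app; auto]).
    assert (H2' : forall n, In n ns2 -> rr n N0) by
      (intros; apply Hns; eapply Permutation_in; [symmetry; eauto | apply in_or_app; auto]).
    destruct (IHlsub1 N0 H1') as [A _]. destruct (IHlsub2 N0 H2') as [B _].
    econstructor. eapply rt_trans. apply steps_subst; eauto. simpl. apply rt_refl. auto. auto.
  - assert (H1' : forall n, In n ns1 -> rr n N0) by
      (intros; apply Hns; eapply Permutation_in; [symmetry; eauto | apply in_or_app; auto]).
    assert (H2' : forall n, In n ns2 -> rr n N0) by
      (intros; apply Hns; eapply Permutation_in; [symmetry; eauto | apply in_or_app; auto]).
    destruct (IHlsub1 N0 H1') as [A _]. destruct (IHlsub2 N0 H2') as [B _].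
    econstructor. eapply rt_trans. apply steps_subst; eauto. simpl. apply rt_refl. auto. auto.
  - destruct (IHlsub N0 Hns) as [A _]. econstructor. eapply rt_trans. apply steps_subst; eauto.
    simpl. apply rt_refl. auto.
  - econstructor. eapply rt_trans. apply steps_subst; eauto. simpl. apply rt_refl.
    intros x [].
  - injection E2; intros; subst; simpl in *; contradiction.

  - assert (H1' : forall n, In n ns1 -> rr n N0) by
      (intros; apply Hns; eapply Permutation_in; [symmetry; eauto | apply in_or_app; auto]).
    assert (H2' : forall n, In n ns2 -> rr n N0) by
      (intros; apply Hns; eapply Permutation_in; [symmetry; eauto | apply in_or_app; auto]).
    destruct (IHlsub1 N0 H1') as [A _]. destruct (IHlsub2 N0 H2') as [_ BB].
    econstructor. eapply rt_trans. apply steps_subst; eauto. simpl. apply rt_refl.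
    intros x [<- | Hx]. apply A. apply H4. simpl; auto.
    eapply BB; eauto. intros y Hy. apply H4. simpl; auto.
  - injection E1 as E1; injection E2 as E2; subst.
    assert (H1' : forall n, In n ns1 -> rr n N0) by
      (intros; apply Hns; eapply Permutation_in; [symmetry; eauto | apply in_or_app; auto]).
    assert (H2' : forall n, In n ns2 -> rr n N0) by
      (intros; apply Hns; eapply Permutation_in; [symmetry; eauto | apply in_or_app; auto]).
    destruct (IHlsub1 N0 H1') as [A _]. destruct (IHlsub2 N0 H2') as [_ BB].
    intros B0 HB x [<- | Hx]. apply A. apply HB. simpl; auto.
    eapply BB; eauto. intros y Hy. apply HB. simpl; auto.
Qed.

Ltac gsteps := match goal with HS : steps ?M0 _ |- rr _ ?M0 => idtac end.

Lemma rstep_rr : forall m r, rstep m r -> forall m', r = Some m' -> forall M, rr m M -> rr m' M.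
Proof.
  induction 1; intros mm E M0 HM; try discriminate E;
  try (destruct r as [r|]; simpl in E; [|discriminate E]); injection E; intros; subst.
  - inversion HM as [| | | | ? ? X HS0 Hr |]; subst.
    destruct (rfill_inv _ _ _ Hr) as [L [H [HS [HF HH]]]].
    inversion HH as [| | | | | ? ? B HS1 Hin]; subst. assert (In m [m]) by (simpl; auto).
    eapply rr_anti. eapply rt_trans. exact HS0. apply steps_der. eapply rt_trans. exact HS.
    apply steps_fill. exact HS1. eapply rr_anti. apply rt_step. apply st_der.
    apply rfill_rr; auto.
  - inversion HM as [| | ? ? ? X Y HS0 Hr Hn | | |]; subst.
    destruct (rfill_inv _ _ _ Hr) as [L [H [HS [HF HH]]]].
    inversion HH as [| ? ? A HS1 Hm | | | |]; subst.
    eapply rr_anti. eapply rt_trans. exact HS0. apply steps_app. eapply rt_trans. exact HS.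
    apply steps_fill. exact HS1. apply rt_refl. eapply rr_anti. apply rt_step. apply st_beta.
    apply rfill_rr; auto. econstructor. apply rt_refl. auto.
    rewrite <- (Forall2_length HF). apply rr_lift; auto.
  - inversion HM as [| | | ? ? ? X Y HS0 Hm Hr | |]; subst.
    destruct (rfill_inv _ _ _ Hr) as [L [H1 [HS [HF HH]]]].
    inversion HH as [| | | | | ? ? B HS1 Hin]; subst.
    eapply rr_anti. eapply rt_trans. exact HS0. apply steps_es. apply rt_refl. eapply rt_trans. exact HS.
    apply steps_fill. exact HS1. eapply rr_anti. apply rt_step. apply st_subst.
    apply rfill_rr; auto. rewrite (Forall2_length HF) in H.
    destruct (lsub_rr _ _ _ _ H B Hin) as [A _]. apply A. apply rr_lift; auto.
  - inversion HM; subst. econstructor; eauto.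
  - inversion HM; subst. econstructor; eauto.
  - inversion HM; subst. econstructor; eauto.
  - inversion HM; subst. econstructor; eauto.
  - inversion HM; subst. econstructor; eauto.
  - inversion HM; subst. econstructor; eauto.
  - inversion HM as [| | | | | ? ? B HS0 Hin]; subst. econstructor; eauto.
    intros x Hx. apply in_app_or in Hx. destruct Hx as [Hx | [<- | Hx]].
    apply Hin; apply in_or_app; auto. eapply IHrstep; eauto. apply Hin; apply in_or_app; simpl; auto.
    apply Hin; apply in_or_app; simpl; auto.
Qed.

Lemma rsteps_rr : forall m p, rsteps m p -> forall M, rr m M -> rr p M.
Proof.
  induction 1; intros; eauto. eapply rstep_rr; eauto.
Qed.

Lemma rn_lam : forall m, rnormal (RLam m) -> rnormal m.
Proof. intros m H r Hs. apply (H (option_map RLam r)). constructor; auto. Qed.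
Lemma rn_app_l : forall m n, rnormal (RApp m n) -> rnormal m.
Proof. intros m n H r Hs. eapply H. apply rs_app_l; eauto. Qed.
Lemma rn_app_r : forall m n, rnormal (RApp m n) -> rnormal n.
Proof. intros m n H r Hs. eapply H. apply rs_app_r; eauto. Qed.
Lemma rn_es_l : forall m n, rnormal (RES m n) -> rnormal m.
Proof. intros m n H r Hs. eapply H. apply rs_es_l; eauto. Qed.
Lemma rn_es_r : forall m n, rnormal (RES m n) -> rnormal n.
Proof. intros m n H r Hs. eapply H. apply rs_es_r; eauto. Qed.
Lemma rn_der : forall m, rnormal (RDer m) -> rnormal m.
Proof. intros m H r Hs. eapply H. apply rs_der_c; eauto. Qed.
Lemma rn_bag : forall ms x, rnormal (RBag ms) -> In x ms -> rnormal x.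
Proof.
  intros ms x H Hx r Hs. apply in_split in Hx. destruct Hx as [l1 [l2 ->]].
  eapply H. apply rs_bag; eauto.
Qed.

Lemma occ_rlift : forall a k c d, c < d -> occ c (rlift k d a) = occ c a.
Proof.
  induction a using rterm_ind'; intros k c d Hcd; simpl.
  - destruct (d <=? i) eqn:E; simpl; auto.
    apply Nat.leb_le in E.
    replace (i + k =? c) with false by (symmetry; apply Nat.eqb_neq; lia).
    replace (i =? c) with false by (symmetry; apply Nat.eqb_neq; lia). reflexivity.
  - apply IHa; lia.
  - rewrite IHa1, IHa2 by lia; reflexivity.
  - rewrite IHa1, IHa2 by lia; reflexivity.
  - apply IHa; lia.
  - induction H; simpl; [reflexivity|]. rewrite H, IHForall by lia; reflexivity.
Qed.

Lemma split_list : forall (ns : list rterm) a b, a + b = length ns ->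
  exists ns1 ns2, ns = ns1 ++ ns2 /\ length ns1 = a /\ length ns2 = b.
Proof.
  intros. exists (firstn a ns), (skipn a ns). split. symmetry; apply firstn_skipn.
  rewrite length_firstn, length_skipn. lia.
Qed.

Lemma lsub_exists : forall m c ns, occ c m = length ns -> exists m', lsub c m ns m'.
Proof.
  induction m using rterm_ind'; intros c ns Hl; simpl in Hl.
  - destruct (i =? c) eqn:E.
    + apply Nat.eqb_eq in E; subst. destruct ns as [|n [|]]; simpl in Hl; try lia.
      eexists. constructor.
    + apply Nat.eqb_neq in E. destruct ns; simpl in Hl; try lia.
      destruct (Nat.lt_ge_cases i c). eexists. constructor; auto.
      destruct i. exfalso; lia. eexists. apply ls_var_gt. lia.
  - destruct (IHm (S c) ns Hl) as [m' H]. eexists. constructor; eauto.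
  - destruct (split_list ns _ _ Hl) as [ns1 [ns2 [-> [L1 L2]]]].
    destruct (IHm1 c ns1 (eq_sym L1)) as [a H1]. destruct (IHm2 c ns2 (eq_sym L2)) as [b H2].
    eexists. eapply ls_app; [apply Permutation_refl | eauto | eauto].
  - destruct (split_list ns _ _ Hl) as [ns1 [ns2 [-> [L1 L2]]]].
    destruct (IHm1 (S c) ns1 (eq_sym L1)) as [a H1]. destruct (IHm2 c ns2 (eq_sym L2)) as [b H2].
    eexists. eapply ls_es; [apply Permutation_refl | eauto | eauto].
  - destruct (IHm c ns Hl) as [m' H]. eexists. constructor; eauto.
  - revert ns Hl. induction H; intros ns Hl; simpl in Hl.
    + destruct ns; simpl in Hl; try lia. eexists. constructor.
    + destruct (split_list ns _ _ Hl) as [ns1 [ns2 [-> [L1 L2]]]].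
      destruct (H c ns1 (eq_sym L1)) as [a H1]. destruct (IHForall ns2 (eq_sym L2)) as [b H2].
      inversion H2; subst.
      * eexists. econstructor; [apply Permutation_refl | eauto | constructor].
      * eexists. econstructor; [apply Permutation_refl | eauto | eauto].
Qed.

Lemma NN1 : forall l a b, ~ rnormal (RApp (rfill l (RLam a)) b).
Proof. intros l a b H. eapply H. apply rs_beta. Qed.
Lemma NN2 : forall l ms, ~ rnormal (RDer (rfill l (RBag ms))).
Proof.
  intros l ms H. destruct (Nat.eq_dec (length ms) 1).
  - destruct ms as [|m [|]]; simpl in e; try lia. eapply H. apply rs_der1.
  - eapply H. apply rs_der0; auto.
Qed.
Lemma NN3 : forall l a ns, ~ rnormal (RES a (rfill l (RBag ns))).
Proof.
  intros l a ns H. destruct (Nat.eq_dec (occ 0 a) (length ns)).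
  - rewrite <- (occ_rlift a (length l) 0 1) in e by lia.
    destruct (lsub_exists _ _ _ e) as [m' Hm]. eapply H. apply rs_subst; eauto.
  - eapply H. apply rs_subst0; auto.
Qed.

Lemma rapprox_fill_inv : forall L n H, rapprox n (fill L H) ->
  exists l h, n = rfill l h /\ Forall2 rapprox l L /\ rapprox h H.
Proof.
  induction L; intros n H Hr; simpl in *.
  - exists [], n. auto.
  - destruct (IHL _ _ Hr) as [l [h [-> [HF Hh]]]]. inversion Hh as [| | | ? ? ? ? Ha Hb | |]; subst.
    eexists (_ :: l), _. split; [reflexivity | split; eauto].
Qed.

Lemma rapprox_fill : forall l L h H, Forall2 rapprox l L -> rapprox h H -> rapprox (rfill l h) (fill L H).
Proof.
  intros l L h H HF. revert h H. induction HF; intros; simpl; auto. apply IHHF. constructor; auto.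
Qed.

Lemma persist : forall N N', step N N' -> forall p, rnormal p -> rapprox p N -> rapprox p N'.
Proof.
  induction 1; intros p Hn Hp.
  - inversion Hp; subst.
    match goal with Hf : rapprox _ (fill _ _) |- _ =>
      destruct (rapprox_fill_inv _ _ _ Hf) as [l [h [-> [_ Hh]]]] end.
    inversion Hh; subst. exfalso; eapply NN1; eauto.
  - inversion Hp; subst.
    match goal with Hf : rapprox _ (fill _ _) |- _ =>
      destruct (rapprox_fill_inv _ _ _ Hf) as [l [h [-> [_ Hh]]]] end.
    inversion Hh; subst. exfalso; eapply NN3; eauto.
  - inversion Hp; subst.
    match goal with Hf : rapprox _ (fill _ _) |- _ =>
      destruct (rapprox_fill_inv _ _ _ Hf) as [l [h [-> [_ Hh]]]] end.
    inversion Hh; subst. exfalso; eapply NN2; eauto.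
  - inversion Hp; subst. constructor. apply IHstep; auto. eapply rn_lam; eauto.
  - inversion Hp; subst. constructor; auto. apply IHstep; auto. eapply rn_app_l; eauto.
  - inversion Hp; subst. constructor; auto. apply IHstep; auto. eapply rn_app_r; eauto.
  - inversion Hp; subst. constructor; auto. apply IHstep; auto. eapply rn_es_l; eauto.
  - inversion Hp; subst. constructor; auto. apply IHstep; auto. eapply rn_es_r; eauto.
  - inversion Hp; subst. constructor; auto. intros x Hx. apply IHstep; auto. eapply rn_bag; eauto.
  - inversion Hp; subst. constructor; auto. apply IHstep; auto. eapply rn_der; eauto.
Qed.

Lemma persist_steps : forall N N', steps N N' -> forall p, rnormal p -> rapprox p N -> rapprox p N'.
Proof. induction 1; intros; eauto. eapply persist; eauto. Qed.

Lemma claimB : forall p, rnormal p -> forall M, rr p M -> exists N, steps M N /\ rapprox p N.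
Proof.
  induction p using rterm_ind'; intros Hn M0 Hr;
  inversion Hr as [? ? HS0 | ? ? X HS0 Hm | ? ? ? X Y HS0 H1 H2 | ? ? ? X Y HS0 H1 H2 | ? ? X HS0 Hm | ? ? B HS0 Hin]; subst.
  - eexists; split; eauto. constructor.
  - destruct (IHp (rn_lam _ Hn) _ Hm) as [N [HS HA]].
    exists (Lam N); split. eapply rt_trans; eauto. apply steps_lam; auto. constructor; auto.
  - destruct (IHp1 (rn_app_l _ _ Hn) _ H1) as [N1 [HS1 HA1]].
    destruct (IHp2 (rn_app_r _ _ Hn) _ H2) as [N2 [HS2 HA2]].
    exists (App N1 N2); split. eapply rt_trans; eauto. apply steps_app; auto. constructor; auto.
  - destruct (IHp1 (rn_es_l _ _ Hn) _ H1) as [N1 [HS1 HA1]].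
    destruct (IHp2 (rn_es_r _ _ Hn) _ H2) as [N2 [HS2 HA2]].
    exists (ES N1 N2); split. eapply rt_trans; eauto. apply steps_es; auto. constructor; auto.
  - destruct (IHp (rn_der _ Hn) _ Hm) as [N [HS HA]].
    exists (Der N); split. eapply rt_trans; eauto. apply steps_der; auto. constructor; auto.
  - assert (K : forall l, Forall (fun p => rnormal p -> forall M, rr p M -> exists N, steps M N /\ rapprox p N) l ->
       (forall x, In x l -> rnormal x) -> (forall x, In x l -> rr x B) ->
       exists N, steps B N /\ forall x, In x l -> rapprox x N).
    { induction 1; intros HN HR.
      - exists B. split. apply rt_refl. intros x [].
      - destruct (H0 (HN x (or_introl eq_refl)) B (HR x (or_introl eq_refl))) as [N1 [HS1 HA1]].
        destruct IHForall as [N2 [HS2 HA2]]; [intros; apply HN; simpl; auto | intros; apply HR; simpl; auto |].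
        destruct (confluence _ _ _ HS1 HS2) as [N3 [S1 S2]].
        exists N3. split. eapply rt_trans; eauto.
        intros y [<- | Hy]. eapply persist_steps; [exact S1 | apply HN; simpl; auto | exact HA1].
        eapply persist_steps; [exact S2 | apply HN; simpl; auto | apply HA2; auto]. }
    destruct (K ms H (fun x Hx => rn_bag _ _ Hn Hx) Hin) as [N [HS HA]].
    exists (Bang N). split. eapply rt_trans; eauto. apply steps_bang; auto. constructor; auto.
Qed.

Fixpoint hd (t : term) : term := match t with ES a _ => hd a | _ => t end.
Definition badL (t : term) : bool := match hd t with Lam _ | Bot => true | _ => false end.
Definition badB (t : term) : bool := match hd t with Bang _ | Bot => true | _ => false end.

Fixpoint om (t : term) : term :=
  match t with
  | Var i => Var i
  | Bot => Bot
  | Lam a => Lam (om a)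
  | Bang a => Bang (om a)
  | App a b => if badL (om a) then Bot else App (om a) (om b)
  | Der a => if badB (om a) then Bot else Der (om a)
  | ES a b => if badB (om b) then Bot else ES (om a) (om b)
  end.

Lemma hd_fill : forall L t, hd (fill L t) = hd t.
Proof. induction L; intros; simpl; auto. rewrite IHL. reflexivity. Qed.

Lemma hd_spine : forall t, exists L, t = fill L (hd t).
Proof.
  induction t; try (exists []; reflexivity).
  destruct IHt1 as [L HL]. exists (L ++ [t2]). rewrite fill_app. simpl. congruence.
Qed.

Lemma forbidden_bad : forall s, forbidden s ->
  match s with App a _ => badL a = true | Der a => badB a = true | ES _ b => badB b = true | _ => False end.
Proof.
  intros s [L [A [B H]]].
  destruct H as [H|[H|[H|[H|[H|H]]]]]; subst; simpl; unfold badL, badB; rewrite hd_fill; reflexivity.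
Qed.

Lemma sub_bot : forall s, subterm s Bot -> ~ forbidden s.
Proof. intros s H. inversion H; subst. intros F. apply forbidden_bad in F. exact F. Qed.

Lemma om_approx : forall N, approximant (om N).
Proof.
  unfold approximant. induction N; intros s Hs; simpl in Hs.
  - inversion Hs; subst. intros F. apply forbidden_bad in F. exact F.
  - inversion Hs; subst. intros F. apply forbidden_bad in F. exact F. auto.
  - destruct (badL (om N1)) eqn:E. apply sub_bot; auto.
    inversion Hs; subst; auto. intros F. apply forbidden_bad in F. congruence.
  - destruct (badB (om N2)) eqn:E. apply sub_bot; auto.
    inversion Hs; subst; auto. intros F. apply forbidden_bad in F. congruence.
  - inversion Hs; subst. intros F. apply forbidden_bad in F. exact F. auto.
  - destruct (badB (om N)) eqn:E. apply sub_bot; auto.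
    inversion Hs; subst; auto. intros F. apply forbidden_bad in F. congruence.
  - apply sub_bot; auto.
Qed.

Lemma om_le : forall N, bot_le (om N) N.
Proof.
  induction N; simpl; try (constructor; auto; fail).
  - destruct (badL (om N1)); constructor; auto.
  - destruct (badB (om N2)); constructor; auto.
  - destruct (badB (om N)); constructor; auto.
Qed.

Lemma om_T : forall N p, rnormal p -> rapprox p N -> rapprox p (om N).
Proof.
  induction N; intros p Hn Hp; inversion Hp; subst; simpl.
  - constructor.
  - constructor. apply IHN; auto. eapply rn_lam; eauto.
  - assert (A1 : rapprox m (om N1)) by (apply IHN1; auto; eapply rn_app_l; eauto).
    destruct (badL (om N1)) eqn:E.
    + exfalso. unfold badL in E. destruct (hd_spine (om N1)) as [L HL].
      destruct (hd (om N1)) eqn:Eh; try discriminate; rewrite HL in A1;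
      destruct (rapprox_fill_inv _ _ _ A1) as [l [h [-> [_ Hh]]]]; inversion Hh; subst.
      eapply NN1; eauto.
    + constructor; auto. apply IHN2; auto. eapply rn_app_r; eauto.
  - assert (A2 : rapprox n (om N2)) by (apply IHN2; auto; eapply rn_es_r; eauto).
    destruct (badB (om N2)) eqn:E.
    + exfalso. unfold badB in E. destruct (hd_spine (om N2)) as [L HL].
      destruct (hd (om N2)) eqn:Eh; try discriminate; rewrite HL in A2;
      destruct (rapprox_fill_inv _ _ _ A2) as [l [h [-> [_ Hh]]]]; inversion Hh; subst.
      eapply NN3; eauto.
    + constructor; auto. apply IHN1; auto. eapply rn_es_l; eauto.
  - constructor. intros x Hx. apply IHN; auto. eapply rn_bag; eauto.
  - assert (A1 : rapprox m (om N)) by (apply IHN; auto; eapply rn_der; eauto).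
    destruct (badB (om N)) eqn:E.
    + exfalso. unfold badB in E. destruct (hd_spine (om N)) as [L HL].
      destruct (hd (om N)) eqn:Eh; try discriminate; rewrite HL in A1;
      destruct (rapprox_fill_inv _ _ _ A1) as [l [h [-> [_ Hh]]]]; inversion Hh; subst.
      eapply NN2; eauto.
    + constructor; auto.
Qed.

Lemma rfill_inv_ra : forall l h X, rapprox (rfill l h) X ->
  exists L H, X = fill L H /\ Forall2 rapprox l L /\ rapprox h H.
Proof.
  induction l; intros h X Hr; simpl in *.
  - exists [], X. auto.
  - destruct (IHl _ _ Hr) as [L [H [-> [HF HH]]]].
    inversion HH as [| | | ? ? A B Ha Hb | |]; subst.
    exists (B :: L), A. auto.
Qed.

Lemma approx_sub : forall A s, approximant A -> subterm s A -> approximant s.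
Proof.
  intros A s HA Hs t Ht. apply HA. clear HA. induction Hs; auto.
  apply sub_lam; auto. apply sub_app_l; auto. apply sub_app_r; auto. apply sub_es_l; auto.
  apply sub_es_r; auto. apply sub_bang; auto. apply sub_der; auto.
Qed.

Lemma approx_normal : forall A m, approximant A -> rapprox m A -> rnormal m.
Proof.
  intros A m HA Hm r Hs. revert A HA Hm. induction Hs; intros A HA Hm.
  - inversion Hm; subst.
    match goal with Hf : rapprox (rfill _ _) _ |- _ =>
      destruct (rfill_inv_ra _ _ _ Hf) as [L [Hx [-> [_ HH]]]] end.
    inversion HH; subst. apply (HA _ (sub_refl _)). exists L; eexists; exists Bot; right; right; left; reflexivity.
  - inversion Hm; subst.
    match goal with Hf : rapprox (rfill _ _) _ |- _ =>
      destruct (rfill_inv_ra _ _ _ Hf) as [L [Hx [-> [_ HH]]]] end.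
    inversion HH; subst. apply (HA _ (sub_refl _)). exists L; eexists; exists Bot; right; right; left; reflexivity.
  - inversion Hm; subst.
    match goal with Hf : rapprox (rfill _ _) _ |- _ =>
      destruct (rfill_inv_ra _ _ _ Hf) as [L [Hx [-> [_ HH]]]] end.
    inversion HH; subst. apply (HA _ (sub_refl _)). exists L; do 2 eexists; left; reflexivity.
  - inversion Hm; subst.
    match goal with Hf : rapprox (rfill _ _) _ |- _ =>
      destruct (rfill_inv_ra _ _ _ Hf) as [L [Hx [-> [_ HH]]]] end.
    inversion HH; subst. apply (HA _ (sub_refl _)). exists L; do 2 eexists; right; right; right; right; left; reflexivity.
  - inversion Hm; subst.
    match goal with Hf : rapprox (rfill _ _) _ |- _ =>
      destruct (rfill_inv_ra _ _ _ Hf) as [L [Hx [-> [_ HH]]]] end.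
    inversion HH; subst. apply (HA _ (sub_refl _)). exists L; do 2 eexists; right; right; right; right; left; reflexivity.
  - inversion Hm; subst. eapply IHHs; [eapply approx_sub; [exact HA | constructor; constructor] | eassumption].
  - inversion Hm; subst. eapply IHHs; [eapply approx_sub; [exact HA | apply sub_app_l; constructor] | eassumption].
  - inversion Hm; subst. eapply IHHs; [eapply approx_sub; [exact HA | apply sub_app_r; constructor] | eassumption].
  - inversion Hm; subst. eapply IHHs; [eapply approx_sub; [exact HA | apply sub_es_l; constructor] | eassumption].
  - inversion Hm; subst. eapply IHHs; [eapply approx_sub; [exact HA | apply sub_es_r; constructor] | eassumption].
  - inversion Hm; subst. eapply IHHs; [eapply approx_sub; [exact HA | apply sub_der; constructor] | eassumption].
  - inversion Hm; subst. eapply IHHs. eapply approx_sub; eauto. apply sub_bang; constructor.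
    match goal with Hb : forall m, In m _ -> rapprox m _ |- _ => apply Hb end.
    apply in_or_app; simpl; auto.
Qed.

Lemma le_T : forall A N, bot_le A N -> forall m, rapprox m A -> rapprox m N.
Proof.
  induction 1; intros m Hm; inversion Hm; subst; constructor; auto.
Qed.

Ltac inv_ra H := inversion H as [| ? ? Ha | ? ? ? ? Ha Hb | ? ? ? ? Ha Hb | ? ? Ha | ? ? Hall]; subst.

Ltac inv_ra2 H := inversion H as [| x Mx Ha | x y Mx My Ha Hb | x y Mx My Ha Hb | x Mx Ha | xs Mx Hall]; subst.

Lemma lift_inv : forall M n k c, rapprox n (lift k c M) -> exists n0, n = rlift k c n0 /\ rapprox n0 M.
Proof.
  induction M; intros r k c Hn; simpl in Hn.
  - destruct (c <=? n) eqn:E; inversion Hn; subst; exists (RVar n); simpl; rewrite E; split; auto; constructor.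
  - inv_ra Hn. destruct (IHM _ _ _ Ha) as [n0 [-> H]]. exists (RLam n0); split; auto. constructor; auto.
  - inv_ra Hn. destruct (IHM1 _ _ _ Ha) as [a [-> Ha0]]. destruct (IHM2 _ _ _ Hb) as [b [-> Hb0]].
    exists (RApp a b); split; auto. constructor; auto.
  - inv_ra Hn. destruct (IHM1 _ _ _ Ha) as [a [-> Ha0]]. destruct (IHM2 _ _ _ Hb) as [b [-> Hb0]].
    exists (RES a b); split; auto. constructor; auto.
  - inv_ra Hn. clear Hn.
    assert (K : forall zs, (forall m, In m zs -> rapprox m (lift k c M)) ->
              exists ms0, zs = map (rlift k c) ms0 /\ forall m, In m ms0 -> rapprox m M).
    { clear Hall. induction zs; intros H. exists []; split; auto. intros m [].
      destruct (IHM a k c (H a (or_introl eq_refl))) as [a0 [-> Ha]].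
      destruct IHzs as [ms0 [-> Hms]]. intros; apply H; simpl; auto.
      exists (a0 :: ms0). split; auto. intros m [<- | Hm]; auto. }
    destruct (K ms Hall) as [ms0 [-> Hms]]. exists (RBag ms0). split; auto. constructor; auto.
  - inv_ra Hn. destruct (IHM _ _ _ Ha) as [n0 [-> H]]. exists (RDer n0); split; auto. constructor; auto.
  - inversion Hn.
Qed.

Lemma subst_inv : forall M n c N, rapprox n (subst c M N) ->
  exists m0 ns, rapprox m0 M /\ (forall x, In x ns -> rapprox x N) /\ lsub c m0 ns n.
Proof.
  induction M; intros m c N Hn.
  - destruct (Nat.lt_total n c) as [Hl | [He | Hg]].
    + rewrite subst_var_lt in Hn by auto. inversion Hn; subst.
      exists (RVar n), []. split. constructor. split. intros x []. constructor; auto.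
    + subst. rewrite subst_var_eq in Hn. destruct (lift_inv _ _ _ _ Hn) as [n0 [-> H]].
      exists (RVar c), [n0]. split. constructor. split. intros x [<- | []]; auto. constructor.
    + destruct n. lia. rewrite subst_var_gt in Hn by lia. inversion Hn; subst.
      exists (RVar (S n)), []. split. constructor. split. intros x []. constructor; lia.
  - simpl in Hn. inv_ra Hn. destruct (IHM _ _ _ Ha) as [a [ns [Ha1 [Hns Hl]]]].
    exists (RLam a), ns. split. constructor; auto. split; auto. constructor; auto.
  - simpl in Hn. inv_ra Hn.
    destruct (IHM1 _ _ _ Ha) as [a [ns1 [Ha1 [Hns1 Hl1]]]].
    destruct (IHM2 _ _ _ Hb) as [b [ns2 [Hb1 [Hns2 Hl2]]]].
    exists (RApp a b), (ns1 ++ ns2). split. constructor; auto. split.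
    intros x Hx; apply in_app_or in Hx; destruct Hx; auto.
    eapply ls_app; [apply Permutation_refl | eauto | eauto].
  - simpl in Hn. inv_ra Hn.
    destruct (IHM1 _ _ _ Ha) as [a [ns1 [Ha1 [Hns1 Hl1]]]].
    destruct (IHM2 _ _ _ Hb) as [b [ns2 [Hb1 [Hns2 Hl2]]]].
    exists (RES a b), (ns1 ++ ns2). split. constructor; auto. split.
    intros x Hx; apply in_app_or in Hx; destruct Hx; auto.
    eapply ls_es; [apply Permutation_refl | eauto | eauto].
  - simpl in Hn. inv_ra Hn. clear Hn.
    assert (K : forall zs, (forall m, In m zs -> rapprox m (subst c M N)) ->
      exists ys ns, (forall y, In y ys -> rapprox y M) /\ (forall x, In x ns -> rapprox x N) /\
        lsub c (RBag ys) ns (RBag zs)).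
    { clear Hall. induction zs; intros H.
      - exists [], []. split. intros y []. split. intros x []. constructor.
      - destruct (IHM _ _ _ (H a (or_introl eq_refl))) as [y [ns1 [Hy [Hns1 Hl1]]]].
        destruct IHzs as [ys [ns2 [Hys [Hns2 Hl2]]]]. intros; apply H; simpl; auto.
        exists (y :: ys), (ns1 ++ ns2). split. intros z [<- | Hz]; auto. split.
        intros x Hx; apply in_app_or in Hx; destruct Hx; auto.
        eapply ls_bag_cons; [apply Permutation_refl | eauto | eauto]. }
    destruct (K ms Hall) as [ys [ns [Hys [Hns Hl]]]]. exists (RBag ys), ns. split. constructor; auto. auto.
  - simpl in Hn. inv_ra Hn. destruct (IHM _ _ _ Ha) as [a [ns [Ha1 [Hns Hl]]]].
    exists (RDer a), ns. split. constructor; auto. split; auto. constructor; auto.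
  - simpl in Hn. inversion Hn.
Qed.

Lemma rsteps_map : forall (f : rterm -> rterm), (forall x y, rstep x (Some y) -> rstep (f x) (Some (f y))) ->
  forall a b, rsteps a b -> rsteps (f a) (f b).
Proof.
  intros f Hf a b H. induction H. apply rt_step; auto. apply rt_refl. eapply rt_trans; eauto.
Qed.

Lemma bag_steps : forall ms ns, Forall2 rsteps ms ns -> forall pre, rsteps (RBag (pre ++ ms)) (RBag (pre ++ ns)).
Proof.
  induction 1; intros pre. apply rt_refl.
  eapply rt_trans.
  - apply (rsteps_map (fun z => RBag (pre ++ z :: l))); [|exact H].
    intros a b Hab. exact (rs_bag pre a l (Some b) Hab).
  - replace (pre ++ y :: l) with ((pre ++ [y]) ++ l) by (rewrite <- app_assoc; reflexivity).
    replace (pre ++ y :: l') with ((pre ++ [y]) ++ l') by (rewrite <- app_assoc; reflexivity).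
    apply IHForall2.
Qed.

Lemma back : forall M N, step M N -> forall n, rapprox n N -> exists m, rapprox m M /\ rsteps m n.
Proof.
  induction 1; intros n Hn.
  - destruct (rapprox_fill_inv _ _ _ Hn) as [l [h [-> [HF Hh]]]].
    inv_ra Hh.
    destruct (lift_inv _ _ _ _ Hb) as [b0 [-> Hb0]].
    exists (RApp (rfill l (RLam m)) b0). split.
    constructor; auto. apply rapprox_fill; auto. constructor; auto.
    apply rt_step. rewrite <- (Forall2_length HF). apply rs_beta.
  - destruct (rapprox_fill_inv _ _ _ Hn) as [l [h [-> [HF Hh]]]].
    destruct (subst_inv _ _ _ _ Hh) as [h0 [ns [Hh0 [Hns Hl]]]].
    destruct (lift_inv _ _ _ _ Hh0) as [a [-> Ha0]].
    exists (RES a (rfill l (RBag ns))). split.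
    constructor; auto. apply rapprox_fill; auto. constructor; auto.
    apply rt_step. apply rs_subst. rewrite (Forall2_length HF). auto.
  - destruct (rapprox_fill_inv _ _ _ Hn) as [l [h [-> [HF Hh]]]].
    exists (RDer (rfill l (RBag [h]))). split.
    constructor; auto. apply rapprox_fill; auto. constructor; auto. intros x [<- | []]; auto.
    apply rt_step. apply rs_der1.
  - inv_ra2 Hn. destruct (IHstep _ Ha) as [w [Hw Hs]]. exists (RLam w). split. constructor; auto.
    apply (rsteps_map RLam); auto. intros a b Hab. exact (rs_lam a (Some b) Hab).
  - inv_ra2 Hn. destruct (IHstep _ Ha) as [w [Hw Hs]]. exists (RApp w y). split. constructor; auto.
    apply (rsteps_map (fun z => RApp z y)); auto. intros a b Hab. exact (rs_app_l a y (Some b) Hab).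
  - inv_ra2 Hn. destruct (IHstep _ Hb) as [w [Hw Hs]]. exists (RApp x w). split. constructor; auto.
    apply (rsteps_map (fun z => RApp x z)); auto. intros a b Hab. exact (rs_app_r x a (Some b) Hab).
  - inv_ra2 Hn. destruct (IHstep _ Ha) as [w [Hw Hs]]. exists (RES w y). split. constructor; auto.
    apply (rsteps_map (fun z => RES z y)); auto. intros a b Hab. exact (rs_es_l a y (Some b) Hab).
  - inv_ra2 Hn. destruct (IHstep _ Hb) as [w [Hw Hs]]. exists (RES x w). split. constructor; auto.
    apply (rsteps_map (fun z => RES x z)); auto. intros a b Hab. exact (rs_es_r x a (Some b) Hab).
  - inv_ra2 Hn. clear Hn.
    assert (K : forall zs, (forall x, In x zs -> rapprox x t') ->
       exists ws, (forall m, In m ws -> rapprox m t) /\ Forall2 rsteps ws zs).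
    { clear Hall. induction zs as [|a zs IHzs]; intros Hx. exists []; split; auto. intros w [].
      destruct (IHstep a (Hx a (or_introl eq_refl))) as [w [Hw Hs]].
      destruct IHzs as [ws [Hws HF]]. intros; apply Hx; simpl; auto.
      exists (w :: ws). split. intros z [<- | Hz]; auto. constructor; auto. }
    destruct (K xs Hall) as [ms0 [Hms HF]]. exists (RBag ms0). split. constructor; auto.
    apply (bag_steps _ _ HF []).
  - inv_ra2 Hn. destruct (IHstep _ Ha) as [w [Hw Hs]]. exists (RDer w). split. constructor; auto.
    apply (rsteps_map RDer); auto. intros a b Hab. exact (rs_der_c a (Some b) Hab).
Qed.

Lemma back_steps : forall M N, steps M N -> forall n, rapprox n N -> exists m, rapprox m M /\ rsteps m n.
Proof.
  induction 1; intros n Hn.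
  - eapply back; eauto.
  - exists n; split; auto. apply rt_refl.
  - destruct (IHclos_refl_trans2 _ Hn) as [m1 [H1 S1]].
    destruct (IHclos_refl_trans1 _ H1) as [m0 [H0x S0]].
    exists m0; split; auto. eapply rt_trans; eauto.
Qed.

Lemma dir1 : forall M p, taylor_BT M p -> nf_taylor M p.
Proof.
  intros M p [A [[HA [N [HS Hle]]] Hp]]. unfold taylor in Hp.
  split. eapply approx_normal; eauto.
  apply (le_T _ _ Hle) in Hp. destruct (back_steps _ _ HS _ Hp) as [m [Hm Hs]].
  exists m; split; auto.
Qed.

Lemma dir2 : forall M p, nf_taylor M p -> taylor_BT M p.
Proof.
  intros M p [Hn [m [Hm Hs]]]. unfold taylor in Hm.
  apply rr_of_rapprox in Hm. apply (rsteps_rr _ _ Hs) in Hm.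
  destruct (claimB _ Hn _ Hm) as [N [HS HN]].
  exists (om N). split. split. apply om_approx. exists N. split; auto. apply om_le.
  apply om_T; auto.
Qed.

Theorem mainTheorem1 (M : term) (HM : bot_free M) :
  rset_eq (taylor_BT M) (nf_taylor M).
Proof.
  intros p. split; intros [q [Hq H]]; exists q; split; auto. apply dir1; auto. apply dir2; auto.
Qed.
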